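(* Let $n\ge 1$ and $1\le p\le k\le n$. The number $F(n;p,k)$ of $\alpha\in\mathcal{ORCT}_n$ with $h(\alpha)=p$ and $w^+(\alpha)=k$ equals $2\binom{n-1}{p-1}$ if $p>1$, and equals $1$ if $p=1$.
   Context: $X_n=\{1,2,\dots,n\}$ with its usual order; maps are written on the right ($x\alpha$). A map $\alpha:X_n\to X_n$ is order-preserving if $x\le y$ implies $x\alpha\le y\alpha$, order-reversing if $x\le y$ implies $x\alpha\ge y\alpha$, and a contraction if $|x\alpha-y\alpha|\le|x-y|$ for all $x,y$. $\mathcal{ORCT}_n$ is the set of all maps $X_n\to X_n$ (defined on all of $X_n$) that are contractions and are either order-preserving or order-reversing. Height $h(\alpha)=|\mathrm{Im}\,\alpha|$; right waist $w^+(\alpha)=\max(\mathrm{Im}\,\alpha)$. *)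

(* Defs.v *)
From mathcomp Require Import all_boot.
Set Implicit Arguments. Unset Strict Implicit. Unset Printing Implicit Defensive.

(* X_n = {1,...,n} is represented by 'I_n = {0,...,n-1} via i |-> i+1.
   Order and distances are invariant under this shift; only the value of
   the right waist needs the +1 correction. *)

Definition distn (m k : nat) : nat := (m - k) + (k - m).

Definition order_preserving n (a : {ffun 'I_n -> 'I_n}) : bool :=
  [forall x : 'I_n, forall y : 'I_n, (x <= y) ==> (a x <= a y)].

Definition order_reversing n (a : {ffun 'I_n -> 'I_n}) : bool :=
  [forall x : 'I_n, forall y : 'I_n, (x <= y) ==> (a y <= a x)].

Definition contraction n (a : {ffun 'I_n -> 'I_n}) : bool :=
  [forall x : 'I_n, forall y : 'I_n, distn (a x) (a y) <= distn x y].

Definition in_ORCT n (a : {ffun 'I_n -> 'I_n}) : bool :=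
  contraction a && (order_preserving a || order_reversing a).

Definition height n (a : {ffun 'I_n -> 'I_n}) : nat := #|[set a x | x : 'I_n]|.

(* right waist: max Im a, read back in X_n = {1..n} (hence the +1) *)
Definition right_waist n (a : {ffun 'I_n -> 'I_n}) : nat :=
  \max_(x : 'I_n) (a x).+1.

Definition F (n p k : nat) : nat :=
  #|[set a : {ffun 'I_n -> 'I_n} | in_ORCT a && (height a == p) && (right_waist a == k)]|.

(* Main.v *)
Require Import Defs.
From mathcomp Require Import all_boot.
From mathcomp Require Import zify.
Set Implicit Arguments. Unset Strict Implicit. Unset Printing Implicit Defensive.

Definition gv m (a : {ffun 'I_m.+1 -> 'I_m.+1}) (x : nat) : nat := a (inord x).
Definition upstep m (a : {ffun 'I_m.+1 -> 'I_m.+1}) :=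
  forall x, x < m -> gv a x <= gv a x.+1 <= (gv a x).+1.

Lemma gv_ord m a (x : 'I_m.+1) : gv a x = a x.
Proof. by rewrite /gv inord_val. Qed.

Lemma step_mono (m : nat) (g : nat -> nat) :
  (forall x, x < m -> g x <= g x.+1 <= (g x).+1) ->
  forall x y, x <= y -> y <= m -> g x <= g y <= g x + (y - x).
Proof.
move=> H x; elim=> [|y IH] hxy hy.
  by rewrite leqn0 in hxy; move/eqP: hxy => ->; lia.
rewrite leq_eqVlt in hxy; case/orP: hxy => [/eqP->|hxy]; first lia.
have := IH hxy (ltnW hy); have := H y hy; lia.
Qed.

Lemma ivt (g : nat -> nat) m :
  (forall i, i < m -> g i.+1 <= (g i).+1) ->
  forall v, g 0 <= v -> v <= g m -> exists2 x, x <= m & g x = v.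
Proof.
elim: m => [|m IH] H v h0 hm; first by exists 0 => //; lia.
case: (leqP v (g m)) => hv.
  have [x hx gx] := IH (fun i hi => H i (leqW hi)) v h0 hv.
  by exists x => //; lia.
by exists m.+1 => //; have := H m (ltnSn m); lia.
Qed.

Lemma card_interval m lo hi : lo <= hi <= m ->
  #|[set v : 'I_m.+1 | lo <= v <= hi]| = hi - lo + 1.
Proof.
move=> hb.
rewrite (_ : [set v : 'I_m.+1 | lo <= v <= hi] =
             [set inord (lo + nat_of_ord j) | j : 'I_(hi - lo).+1] :> {set 'I_m.+1}).
  rewrite card_imset ?card_ord ?addn1 //.
  move=> j1 j2 /(congr1 val) /=.
  have l1 := ltn_ord j1; have l2 := ltn_ord j2.
  rewrite (inordK (_ : lo + j1 < m.+1)); last lia.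
  rewrite (inordK (_ : lo + j2 < m.+1)); last lia.
  by move=> e; apply/val_inj => /=; lia.
apply/setP => v; rewrite inE; apply/idP/imsetP.
  move=> /andP[h1 h2]; have hj : v - lo < (hi - lo).+1 by lia.
  exists (Ordinal hj) => //; apply/val_inj => /=.
  have hv := ltn_ord v; rewrite inordK; lia.
case=> j _ ->; have hj := ltn_ord j; rewrite inordK; lia.
Qed.

Lemma upstep_props m (a : {ffun 'I_m.+1 -> 'I_m.+1}) : upstep a ->
  [/\ order_preserving a, contraction a,
      height a = gv a m - gv a 0 + 1 & right_waist a = (gv a m).+1].
Proof.
move=> H.
have hm : forall x : 'I_m.+1, x <= m by move=> x; have := ltn_ord x.
split.
- apply/forallP => x; apply/forallP => y; apply/implyP => hxy.
  rewrite -!gv_ord; have := step_mono H hxy (hm y); lia.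
- apply/forallP => x; apply/forallP => y; rewrite /distn -!gv_ord.
  case: (leqP x y) => hxy.
    have := step_mono H hxy (hm y); lia.
  have := step_mono H (ltnW hxy) (hm x); lia.
- rewrite /height.
  have -> : [set a x | x : 'I_m.+1] = [set v : 'I_m.+1 | gv a 0 <= v <= gv a m].
    apply/setP => v; rewrite inE; apply/imsetP/idP.
      case=> x _ ->; rewrite -gv_ord.
      have := step_mono H (leq0n x) (hm x); have := step_mono H (hm x) (leqnn m); lia.
    move=> /andP[h0 h1].
    have [x hx gx] := ivt (g := gv a) (fun i hi => proj2 (andP (H i hi))) h0 h1.
    by exists (inord x) => //; apply: val_inj; rewrite /= -gx.
  rewrite card_interval //; have := step_mono H (leq0n m) (leqnn m); have := hm (a (inord m)).
  rewrite /gv; lia.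
- rewrite /right_waist; apply/eqP; rewrite eqn_leq; apply/andP; split.
    apply/bigmax_leqP => x _; rewrite -gv_ord ltnS.
    have := step_mono H (hm x) (leqnn m); lia.
  have := @leq_bigmax _ (fun x : 'I_m.+1 => (a x).+1) ord_max.
  rewrite /gv (_ : inord m = ord_max) //; apply/val_inj; rewrite /= inordK //.
Qed.

Lemma OP_contr_upstep m (a : {ffun 'I_m.+1 -> 'I_m.+1}) :
  order_preserving a -> contraction a -> upstep a.
Proof.
move=> hOP hC x hx.
have h1 : x < m.+1 by lia.
have h2 : x.+1 < m.+1 by lia.
move/forallP/(_ (inord x))/forallP/(_ (inord x.+1)): hOP.
move/forallP/(_ (inord x))/forallP/(_ (inord x.+1)): hC.
rewrite /distn (inordK h1) (inordK h2) /gv.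
move=> hc /implyP ho; have := ho (leqnSn x); lia.
Qed.

Definition cnt m (D : {set 'I_m}) (x : nat) := #|[set i in D | i < x]|.

Lemma cnt0 m (D : {set 'I_m}) : cnt D 0 = 0.
Proof. by apply/eqP; rewrite cards_eq0; apply/eqP/setP => i; rewrite !inE ltn0 andbF. Qed.

Lemma cntm m (D : {set 'I_m}) : cnt D m = #|D|.
Proof. by rewrite /cnt (_ : [set i in D | i < m] = D) //; apply/setP => i; rewrite !inE ltn_ord andbT. Qed.

Lemma cnt_le m (D : {set 'I_m}) x : cnt D x <= #|D|.
Proof. by apply: subset_leq_card; apply/subsetP => i; rewrite inE => /andP[]. Qed.

Lemma cntS m (D : {set 'I_m}) (i : 'I_m) : cnt D i.+1 = cnt D i + (i \in D).
Proof.
rewrite /cnt; case: (boolP (i \in D)) => hi.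
  rewrite (_ : [set j in D | j < i.+1] = i |: [set j in D | j < i]).
    by rewrite cardsU1 !inE ltnn andbF add1n addn1.
  apply/setP => j; rewrite !inE ltnS leq_eqVlt val_eqE.
  by case: (eqVneq j i) => [->|_]; rewrite ?hi ?ltnn //= andbT.
rewrite addn0; congr (#|pred_of_set _|); apply/setP => j; rewrite !inE ltnS leq_eqVlt val_eqE.
by case: (eqVneq j i) => [->|_]; rewrite ?(negbTE hi).
Qed.

Definition mk m lo (D : {set 'I_m}) : {ffun 'I_m.+1 -> 'I_m.+1} :=
  [ffun x : 'I_m.+1 => inord (lo + cnt D x)].

Definition phiset m (a : {ffun 'I_m.+1 -> 'I_m.+1}) : {set 'I_m} :=
  [set i : 'I_m | gv a i.+1 != gv a i].

Definition Pup n p k (a : {ffun 'I_n -> 'I_n}) :=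
  contraction a && order_preserving a && (height a == p) && (right_waist a == k).

Definition Pdown n p k (a : {ffun 'I_n -> 'I_n}) :=
  contraction a && order_reversing a && (height a == p) && (right_waist a == k).

Lemma gmk m lo (D : {set 'I_m}) y : lo + #|D| <= m -> y <= m ->
  gv (mk lo D) y = lo + cnt D y.
Proof.
move=> h hy; rewrite /gv ffunE (inordK (_ : y < m.+1)) //.
by rewrite inordK //; have := cnt_le D y; lia.
Qed.

Lemma mk_props m p k (D : {set 'I_m}) : 1 <= p <= k -> k <= m.+1 -> #|D| = p.-1 ->
  Pup p k (mk (k - p) D) /\ phiset (mk (k - p) D) = D.
Proof.
move=> hp hk hD.
have hb : k - p + #|D| <= m by lia.
have G := gmk hb.
have U : upstep (mk (k - p) D).
  move=> x hx; rewrite !G; [|lia|lia].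
  have := cntS D (Ordinal hx); rewrite /= => ->; case: (_ \in _); lia.
have [op c h w] := upstep_props U.
split.
  rewrite /Pup c op h w !G // cnt0 cntm; apply/andP; split; [|apply/eqP; lia].
  by apply/eqP; lia.
apply/setP => i; have hi := ltn_ord i; rewrite inE !G; [|lia|lia].
rewrite cntS; case: (i \in D).
  by apply/eqP; lia.
by rewrite addn0 eqxx.
Qed.

Lemma Pup_mk m p k (a : {ffun 'I_m.+1 -> 'I_m.+1}) : 1 <= p <= k -> k <= m.+1 ->
  Pup p k a -> #|phiset a| = p.-1 /\ a = mk (k - p) (phiset a).
Proof.
move=> hp hk /andP[/andP[/andP[c op] /eqP h] /eqP w].
have U := OP_contr_upstep op c.
have [_ _ h' w'] := upstep_props U.
have hmono := step_mono U (leq0n m) (leqnn m).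
set D := phiset a.
have form : forall y, y <= m -> gv a y = gv a 0 + cnt D y.
  elim=> [|y IH] hy; first by rewrite cnt0 addn0.
  have hy' : y < m by lia.
  have := cntS D (Ordinal hy'); rewrite /= => ->.
  rewrite inE /= addnA -IH; last lia.
  have := U y hy'; case: (eqVneq (gv a y.+1) (gv a y)) => /= e; lia.
have hD : #|D| = p.-1.
  have := form m (leqnn m); rewrite cntm; lia.
split => //.
apply/ffunP => x; rewrite ffunE; apply: val_inj => /=; rewrite inordK.
  rewrite -gv_ord form; [lia|]; have := ltn_ord x; lia.
have := cnt_le D x; lia.
Qed.

Lemma card_up m p k : 1 <= p <= k -> k <= m.+1 ->
  #|[set a : {ffun 'I_m.+1 -> 'I_m.+1} | Pup p k a]| = 'C(m, p.-1).
Proof.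
move=> hp hk.
rewrite (_ : [set a | Pup p k a] = mk (k - p) @: [set D : {set 'I_m} | #|D| == p.-1]).
  rewrite card_in_imset ?card_draws ?card_ord //.
  move=> D E; rewrite !inE => /eqP hD /eqP hE e.
  have [_ <-] := mk_props hp hk hD; have [_ <-] := mk_props hp hk hE.
  by rewrite e.
apply/setP => a; rewrite inE; apply/idP/imsetP.
  move=> H; have [hD ea] := Pup_mk hp hk H.
  by exists (phiset a) => //; rewrite inE hD.
by case=> D; rewrite inE => /eqP hD ->; have [] := mk_props hp hk hD.
Qed.

Definition rv n (a : {ffun 'I_n -> 'I_n}) : {ffun 'I_n -> 'I_n} :=
  [ffun x => a (rev_ord x)].

Lemma rvK n : cancel (@rv n) (@rv n).
Proof. by move=> a; apply/ffunP => x; rewrite !ffunE rev_ordK. Qed.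

Lemma Pdown_rv n p k (a : {ffun 'I_n -> 'I_n}) : Pdown p k a = Pup p k (rv a).
Proof.
have dr : forall x y : 'I_n, distn (rev_ord x) (rev_ord y) = distn x y.
  move=> x y; rewrite /distn /=; have := ltn_ord x; have := ltn_ord y; lia.
have lr : forall x y : 'I_n, (rev_ord x <= rev_ord y) = (y <= x).
  move=> x y; rewrite /=; have := ltn_ord x; have := ltn_ord y; lia.
have C : contraction a = contraction (rv a).
  apply/idP/idP => /forallP H; apply/forallP => x; apply/forallP => y.
    by rewrite !ffunE -(dr x y); have /forallP := H (rev_ord x); apply.
  have /forallP := H (rev_ord x) => /(_ (rev_ord y)).
  by rewrite !ffunE !rev_ordK dr.
have O : order_reversing a = order_preserving (rv a).
  apply/idP/idP => /forallP H; apply/forallP => x; apply/forallP => y;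
    apply/implyP => hxy.
    rewrite !ffunE; have /forallP := H (rev_ord y) => /(_ (rev_ord x)) /implyP; apply.
    by rewrite lr.
  have /forallP := H (rev_ord y) => /(_ (rev_ord x)) /implyP.
  by rewrite !ffunE !rev_ordK lr; apply.
have Hh : height a = height (rv a).
  rewrite /height; congr (#|pred_of_set _|); apply/setP => v; apply/imsetP/imsetP; case=> x _ ->.
    by exists (rev_ord x) => //; rewrite ffunE rev_ordK.
  by exists (rev_ord x) => //; rewrite ffunE.
have W : right_waist a = right_waist (rv a).
  rewrite /right_waist (reindex_inj rev_ord_inj) /=.
  by apply: eq_bigr => x _; rewrite ffunE.
by rewrite /Pdown /Pup C O Hh W.
Qed.

Lemma OP_OR_h1 m (a : {ffun 'I_m.+1 -> 'I_m.+1}) :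
  order_preserving a -> order_reversing a -> height a = 1.
Proof.
move=> /forallP H1 /forallP H2; rewrite /height.
rewrite (_ : [set a x | x : 'I_m.+1] = [set a ord0]) ?cards1 //.
apply/setP => v; rewrite inE; apply/imsetP/eqP.
  case=> x _ ->; apply/val_inj/eqP; rewrite eqn_leq.
  have /forallP/(_ x)/implyP h1 := H1 ord0.
  have /forallP/(_ x)/implyP h2 := H2 ord0.
  by rewrite h1 ?h2.
by move=> ->; exists ord0.
Qed.

Lemma h1_OP n (a : {ffun 'I_n -> 'I_n}) : height a = 1 -> order_preserving a.
Proof.
move=> /eqP /cards1P [v hv].
have e : forall x, a x = v.
  by move=> x; apply/set1P; rewrite -hv; apply/imsetP; exists x.
by apply/forallP => x; apply/forallP => y; rewrite !e leqnn implybT.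
Qed.

Theorem proposition3p3 (n p k : nat) :
  1 <= n -> 1 <= p -> p <= k -> k <= n ->
  F n p k = (if 1 < p then 2 * 'C(n.-1, p.-1) else 1).
Proof.
case: n => [//|m] _ hp1 hpk hk /=.
have hp : 1 <= p <= k by rewrite hp1 hpk.
rewrite /F (_ : [set a | _] = [set a : {ffun 'I_m.+1 -> 'I_m.+1} | Pup p k a] :|: [set a : {ffun 'I_m.+1 -> 'I_m.+1} | Pdown p k a]); last first.
  apply/setP => a; rewrite !inE /in_ORCT /Pup /Pdown.
  by case: (contraction a); case: (order_preserving a); case: (order_reversing a);
     rewrite /= ?orbb ?orbF.
have ED : [set a : {ffun 'I_m.+1 -> 'I_m.+1} | Pdown p k a] = (@rv m.+1) @: [set a : {ffun 'I_m.+1 -> 'I_m.+1} | Pup p k a].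
  rewrite (can2_imset_pre _ (@rvK _) (@rvK _)); apply/setP => a.
  by rewrite !inE Pdown_rv.
have cD : #|[set a : {ffun 'I_m.+1 -> 'I_m.+1} | Pdown p k a]| = 'C(m, p.-1).
  by rewrite ED card_imset ?card_up //; apply: can_inj (@rvK _).
rewrite cardsU cD card_up //.
case: ltnP => hp2.
  rewrite (_ : _ :&: _ = set0) ?cards0; last first.
    apply/setP => a; rewrite !inE /Pup /Pdown.
    apply/negP => /andP[/andP[/andP[/andP[_ op] /eqP h] _] /andP[/andP[/andP[_ or] _] _]].
    by move: h; rewrite OP_OR_h1 //; lia.
  lia.
have p1 : p = 1 by lia.
rewrite (setIidPr _).
  by rewrite cD addnK p1 bin0.
apply/subsetP => a; rewrite !inE /Pup /Pdown => /andP[/andP[/andP[c _] h] w].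
rewrite c h w h1_OP //; move/eqP: h; lia.
Qed.
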